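(* Let $(G,H)$ be an odd pair, i.e. $H<G$ are countable abelian groups such that every element of $G/H$ has odd order. Then the exact sequence \[0\to H\overset{i}{\to}G\overset{\pi}{\to}G/H\to0\] is coarsely split.
   Context: A proper left invariant metric on a countable group is $d(g,h)=\|g^{-1}h\|$ for a proper norm $\|\cdot\|$ ($\|g\|=0$ iff $g=1$, $\|g\|=\|g^{-1}\|$, $\|gh\|\le\|g\|+\|h\|$, finite balls). A map $f$ is coarse if for every $\delta>0$ there is $\epsilon>0$ with $d(x,y)\le\delta\Rightarrow d(f(x),f(y))\le\epsilon$; a coarse equivalence is a coarse map having a coarse inverse up to bounded distance. An exact sequence $0\to K\overset{i}{\to}G\overset{\pi}{\to}Q\to0$ is coarsely split if there are proper left invariant metrics $d_K,d_G,d_Q$ and a coarse equivalence $f:(G,d_G)\to(K\oplus Q,d_K\oplus d_Q)$ ($\ell_1$ sum metric) such that $f\circ i$ is at bounded distance from $k\mapsto(k,0)$ and $\pi'\circ f$ is at bounded distance from $\pi$, where $\pi':K\oplus Q\to Q$ is the projection. *)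

(* Defs.v *)
From HB Require Import structures.
From mathcomp Require Import all_boot all_order all_algebra.
From mathcomp Require Import reals Rstruct.
Set Implicit Arguments. Unset Strict Implicit. Unset Printing Implicit Defensive.
Import Order.TTheory GRing.Theory Num.Theory.
Local Open Scope ring_scope.

Notation Real := Rdefinitions.R.

Definition proper_norm (G : zmodType) (nm : G -> Real) : Prop :=
  [/\ (forall g, nm g = 0 <-> g = 0),
      (forall g, nm (- g) = nm g),
      (forall g h, nm (g + h) <= nm g + nm h)
    & (forall r : Real, exists s : seq G, forall g, nm g <= r -> g \in s)].

Definition norm_metric (G : zmodType) (nm : G -> Real) : G -> G -> Real :=
  fun g h => nm (h - g).

Definition sum_metric (X Y : Type) (dX : X -> X -> Real) (dY : Y -> Y -> Real)
  : X * Y -> X * Y -> Real :=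
  fun u v => dX u.1 v.1 + dY u.2 v.2.

Definition coarse_map (X Y : Type) (dX : X -> X -> Real) (dY : Y -> Y -> Real)
  (f : X -> Y) : Prop :=
  forall delta : Real, 0 < delta -> exists2 eps : Real, 0 < eps &
    forall x y, dX x y <= delta -> dY (f x) (f y) <= eps.

Definition bounded_distance (X Y : Type) (dY : Y -> Y -> Real) (f g : X -> Y) : Prop :=
  exists C : Real, forall x, dY (f x) (g x) <= C.

Definition coarse_equivalence (X Y : Type) (dX : X -> X -> Real) (dY : Y -> Y -> Real)
  (f : X -> Y) : Prop :=
  coarse_map dX dY f /\
  exists g : Y -> X, [/\ coarse_map dY dX g,
     bounded_distance dX (fun x => g (f x)) id
   & bounded_distance dY (fun y => f (g y)) id].

Definition coarsely_split (K G Q : zmodType) (i : K -> G) (pi : G -> Q) : Prop :=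
  exists nK nG nQ,
  [/\ proper_norm nK, proper_norm nG, proper_norm nQ &
   exists f : G -> K * Q,
     let dK := norm_metric nK in let dG := norm_metric nG in
     let dQ := norm_metric nQ in
     [/\ coarse_equivalence dG (sum_metric dK dQ) f,
         bounded_distance (sum_metric dK dQ) (fun k => f (i k)) (fun k => (k, 0))
       & bounded_distance dQ (fun g => (f g).2) pi]].

Definition has_odd_order (Q : zmodType) (q : Q) : Prop :=
  exists n : nat, [/\ (0 < n)%N, q *+ n = 0,
    (forall m : nat, (0 < m)%N -> q *+ m = 0 -> (n <= m)%N) & odd n].

(* Main.v *)
Require Import Defs.
From HB Require Import structures.
From mathcomp Require Import all_boot all_order all_algebra.
From mathcomp Require Import reals Rstruct.
From Stdlib Require Import ClassicalEpsilon Classical.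
Set Implicit Arguments. Unset Strict Implicit. Unset Printing Implicit Defensive.
Import Order.TTheory GRing.Theory Num.Theory.
Local Open Scope ring_scope.


Definition natnorm (T : zmodType) (N : T -> nat) : Prop :=
  [/\ (forall g, N g = 0%N <-> g = 0),
      (forall g, N (- g) = N g),
      (forall g h, (N (g + h)%R <= N g + N h)%N)
    & (forall r : nat, exists s : seq T, forall g, (N g <= r)%N -> g \in s)].

Lemma natnorm_proper (T : zmodType) (N : T -> nat) :
  natnorm N -> proper_norm (fun x => (N x)%:R : Rdefinitions.R).
Proof.
case=> h0 hN hD hB; split.
- move=> g; rewrite -h0; split; first by move/eqP; rewrite pnatr_eq0 => /eqP.
  by move=> ->.
- by move=> g; rewrite hN.
- by move=> g h; rewrite -natrD ler_nat.
- move=> r; have [s hs] := hB (Num.Def.archi_bound `|r|).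
  exists s => g hg; apply: hs; rewrite -(ler_nat Rdefinitions.R); apply: ltW.
  apply: (le_lt_trans hg); apply: (le_lt_trans (ler_norm r)).
  exact: archi_boundP.
Qed.

Definition letter := (nat * bool)%type.
Definition ev (G : countZmodType) (x : letter) : G :=
  let g := odflt 0 (unpickle x.1) in if x.2 then g else - g.
Definition evw (G : countZmodType) (w : seq letter) : G := \sum_(x <- w) ev G x.
Definition cost (w : seq letter) : nat := (\sum_(x <- w) x.1.+1)%N.
Fixpoint words (n : nat) (L : seq letter) : seq (seq letter) :=
  if n is n'.+1 then [::] :: [seq x :: w | x <- L, w <- words n' L] else [:: [::]].
Definition letters (m : nat) : seq letter :=
  [seq (j, b) | j <- iota 0 m, b <- [:: true; false]].

Lemma words_mem n L w : (size w <= n)%N -> all (mem L) w -> w \in words n L.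
Proof.
elim: n w => [|n IH] [|x w] //= hs /andP [hx hw].
rewrite in_cons /=; apply/allpairsPdep; exists x, w; split => //.
exact: IH.
Qed.

Lemma cost_cons x w : cost (x :: w) = (x.1.+1 + cost w)%N.
Proof. by rewrite /cost big_cons. Qed.

Lemma cost_words w m : (cost w <= m)%N -> w \in words m (letters m).
Proof.
move=> hc; apply: words_mem.
  elim: w m hc => [|x w IH] m //=; rewrite cost_cons => hc.
  have := IH (m.-1); case: m hc => [|m] hc //=; rewrite ltnS; apply.
  by move: hc; rewrite addSn ltnS; apply: leq_trans; rewrite leq_addl.
apply/allP => [[j b]] hin.
have hj : (j < m)%N.
  elim: w hin m hc => [|y w IH] //=; rewrite in_cons => /orP [/eqP <-|h] m;
   rewrite cost_cons /=.
    by move=> hc; apply: leq_trans hc; rewrite leq_addr.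
  move=> hc; apply: (IH h); apply: leq_trans hc; exact: leq_addl.
rewrite inE /letters; apply/allpairsP; exists (j, b); split => //; first by rewrite mem_iota.
by case: (b) => /=; rewrite !inE.
Qed.

Definition wP (G : countZmodType) (g : G) (m : nat) : bool :=
  has (fun w => (evw G w == g) && (cost w <= m)%N) (words m (letters m)).

Lemma wP_ex (G : countZmodType) (g : G) : exists m, wP g m.
Proof.
exists (cost [:: (pickle g, true)]); apply/hasP.
exists [:: (pickle g, true)]; first exact: cost_words.
by rewrite /evw big_seq1 /ev /= pickleK /= eqxx leqnn.
Qed.

Definition wN (G : countZmodType) (g : G) : nat := ex_minn (wP_ex g).

Lemma wN_le (G : countZmodType) (g : G) m :
  (wN g <= m)%N <-> exists w, evw G w = g /\ (cost w <= m)%N.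
Proof.
rewrite /wN; case: ex_minnP => n /hasP [w _ /andP [/eqP hw hc]] hmin; split.
  by move=> hn; exists w; split => //; apply: leq_trans hn.
case=> w' [hw' hc']; apply: hmin; apply/hasP; exists w'; first exact: cost_words.
by rewrite hw' eqxx hc'.
Qed.

Lemma evw_cat (G : countZmodType) w1 w2 : evw G (w1 ++ w2) = evw G w1 + evw G w2.
Proof. by rewrite /evw big_cat. Qed.
Lemma cost_cat w1 w2 : cost (w1 ++ w2) = (cost w1 + cost w2)%N.
Proof. by rewrite /cost big_cat. Qed.

Definition flip (x : letter) : letter := (x.1, ~~ x.2).
Lemma evw_flip (G : countZmodType) w : evw G (map flip w) = - evw G w.
Proof.
rewrite /evw big_map -sumrN; apply: eq_bigr => [[j b]] _ /=.
by rewrite /ev /=; case: b => //=; rewrite opprK.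
Qed.
Lemma cost_flip w : cost (map flip w) = cost w.
Proof. by rewrite /cost big_map. Qed.

Lemma wN_natnorm (G : countZmodType) : natnorm (@wN G).
Proof.
split.
- move=> g; split.
    move=> h; have [[|x w] [hw hc]] : exists w, evw G w = g /\ (cost w <= 0)%N
      by apply/wN_le; rewrite h.
      by rewrite -hw /evw big_nil.
    by move: hc; rewrite cost_cons.
  move=> ->; apply/eqP; rewrite -leqn0; apply/wN_le; exists [::].
  by rewrite /evw /cost !big_nil.
- have H1 : forall g : G, (wN (- g) <= wN g)%N.
    move=> g; have [w [hw hc]] := (proj1 (wN_le g (wN g)) (leqnn _)).
    apply/wN_le; exists (map flip w); by rewrite evw_flip hw cost_flip.
  move=> g; apply/eqP; rewrite eqn_leq H1 /=.
  by have := H1 (- g); rewrite opprK.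
- move=> g h.
  have [w1 [h1 c1]] := (proj1 (wN_le g (wN g)) (leqnn _)).
  have [w2 [h2 c2]] := (proj1 (wN_le h (wN h)) (leqnn _)).
  apply/wN_le; exists (w1 ++ w2); rewrite evw_cat cost_cat h1 h2; split => //.
  exact: leq_add.
- move=> r; exists (map (evw G) (words r (letters r))) => g hg.
  have [w [hw hc]] := (proj1 (wN_le g r) hg).
  by rewrite -hw; apply: map_f; apply: cost_words.
Qed.

Fixpoint L (Q : zmodType) (c : nat -> Q) (n : nat -> nat) k : seq Q :=
  if k is k'.+1 then [seq x + c k' *+ a | x <- L c n k', a <- iota 0 (n k')]
  else [:: 0].

Lemma mymulrn_mod (Q : zmodType) (x : Q) m a : x *+ m = 0 -> x *+ a = x *+ (a %% m)%N.
Proof.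
move=> hx; rewrite {1}(divn_eq a m) mulrnDr mulnC mulrnA hx mul0rn add0r //.
Qed.

Lemma L_mem (Q : zmodType) (c : nat -> Q) n (hn : forall j, (0 < n j)%N)
  (hc : forall j, c j *+ n j = 0) k x a :
  x \in L c n k -> x + c k *+ a \in L c n k.+1.
Proof.
move=> hx; rewrite (mymulrn_mod a (hc k)) /=; apply/allpairsP.
by exists (x, (a %% n k)%N); split => //=; rewrite mem_iota add0n ltn_pmod //.
Qed.

Lemma L_memE (Q : zmodType) (c : nat -> Q) n k y :
  y \in L c n k.+1 -> exists x a, x \in L c n k /\ y = x + c k *+ a.
Proof. by move=> /allpairsP [[x a] [/= hx _ ->]]; exists x, a. Qed.

Lemma L_add (Q : zmodType) (c : nat -> Q) n (hn : forall j, (0 < n j)%N)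
  (hc : forall j, c j *+ n j = 0) k x y :
  x \in L c n k -> y \in L c n k -> x + y \in L c n k.
Proof.
elim: k x y => [|k IH] x y.
  by rewrite /= !mem_seq1 => /eqP -> /eqP ->; rewrite addr0.
move=> /L_memE [x0 [a [hx ->]]] /L_memE [y0 [b [hy ->]]].
rewrite addrACA -mulrnDr; apply: L_mem => //; exact: IH.
Qed.

Lemma L_opp (Q : zmodType) (c : nat -> Q) n (hn : forall j, (0 < n j)%N)
  (hc : forall j, c j *+ n j = 0) k x :
  x \in L c n k -> - x \in L c n k.
Proof.
elim: k x => [|k IH] x.
  by rewrite /= !mem_seq1 => /eqP ->; rewrite oppr0.
move=> /L_memE [x0 [a [hx ->]]].
have -> : - (x0 + c k *+ a) = - x0 + c k *+ (a * (n k).-1).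
  rewrite opprD; congr (_ + _); apply: (addrI (c k *+ a)).
  rewrite subrr -mulrnDr -mulnS prednK // mulnC mulrnA hc mul0rn //.
apply: L_mem => //; exact: IH.
Qed.

Lemma L_mono (Q : zmodType) (c : nat -> Q) n (hn : forall j, (0 < n j)%N)
  (hc : forall j, c j *+ n j = 0) k m x :
  (k <= m)%N -> x \in L c n k -> x \in L c n m.
Proof.
move=> hkm hx; elim: m hkm => [|m IH]; first by rewrite leqn0 => /eqP <-.
rewrite leq_eqVlt => /orP [/eqP <- //| hk].
have := L_mem hn hc 0 (IH hk); by rewrite mulr0n addr0.
Qed.

Definition dig (Q : zmodType) (c : nat -> Q) n k (q : Q) : nat :=
  find (fun a => q - c k *+ a \in L c n k) (iota 0 (n k)).

Fixpoint S (Q G : zmodType) (c : nat -> Q) n (w : nat -> G) k (q : Q) : G :=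
  if k is k'.+1 then
    w k' *+ dig c n k' q + S c n w k' (q - c k' *+ dig c n k' q)
  else 0.

Lemma dig_spec (Q : zmodType) (c : nat -> Q) n (hn : forall j, (0 < n j)%N)
  (hc : forall j, c j *+ n j = 0) k q :
  q \in L c n k.+1 -> q - c k *+ dig c n k q \in L c n k.
Proof.
move=> /L_memE [x [a [hx ->]]].
set P := (fun a0 : nat => (x + c k *+ a) - c k *+ a0 \in L c n k).
have hP : has P (iota 0 (n k)).
  apply/hasP; exists (a %% n k)%N; first by rewrite mem_iota add0n ltn_pmod //.
  by rewrite /P -(mymulrn_mod a (hc k)) addrK.
have := nth_find 0 hP; rewrite nth_iota ?add0n //.
by have := has_find P (iota 0 (n k)); rewrite hP size_iota => /esym.
Qed.

Lemma dig0 (Q : zmodType) (c : nat -> Q) n (hn : forall j, (0 < n j)%N) k q :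
  q \in L c n k -> dig c n k q = 0%N.
Proof.
move=> hq; rewrite /dig; have := hn k; case: (n k) => [|m] //= _.
by rewrite mulr0n subr0 hq.
Qed.

Lemma dig_shift (Q : zmodType) (c : nat -> Q) n (hn : forall j, (0 < n j)%N)
  (hc : forall j, c j *+ n j = 0) k q p :
  p \in L c n k -> dig c n k (q + p) = dig c n k q.
Proof.
move=> hp; apply: eq_find => a /=.
rewrite addrAC; apply/idP/idP => h.
  by rewrite -(addrK p (q - c k *+ a)); apply: L_add => //; apply: L_opp.
exact: L_add.
Qed.

Lemma S_cons (Q G : zmodType) (c : nat -> Q) n (w : nat -> G)
  (hn : forall j, (0 < n j)%N) k q :
  q \in L c n k -> S c n w k.+1 q = S c n w k q.
Proof. by move=> hq /=; rewrite dig0 // mulr0n subr0 add0r. Qed.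

Lemma S_up (Q G : zmodType) (c : nat -> Q) n (w : nat -> G)
  (hn : forall j, (0 < n j)%N) (hc : forall j, c j *+ n j = 0) k m q :
  (k <= m)%N -> q \in L c n k -> S c n w m q = S c n w k q.
Proof.
move=> hkm hq; elim: m hkm => [|m IH]; first by rewrite leqn0 => /eqP ->.
rewrite leq_eqVlt => /orP [/eqP <- //| hk].
rewrite S_cons //; first exact: IH.
exact: L_mono hq.
Qed.

Lemma piS (Q G : zmodType) (c : nat -> Q) n (w : nat -> G)
  (hn : forall j, (0 < n j)%N) (hc : forall j, c j *+ n j = 0)
  (pi : {additive G -> Q}) (hw : forall j, pi (w j) = c j) k q :
  q \in L c n k -> pi (S c n w k q) = q.
Proof.
elim: k q => [|k IH] q /=; first by rewrite mem_seq1 => /eqP ->; rewrite raddf0.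
move=> hq; rewrite raddfD raddfMn hw IH; first by rewrite addrC subrK.
exact: dig_spec.
Qed.

Lemma S_shift (Q G : zmodType) (c : nat -> Q) n (w : nat -> G)
  (hn : forall j, (0 < n j)%N) (hc : forall j, c j *+ n j = 0) k p :
  p \in L c n k -> forall m, (k <= m)%N -> forall q, q \in L c n m ->
  S c n w m (q + p) - S c n w m q \in
    [seq S c n w k (u + p) - S c n w k u | u <- L c n k].
Proof.
move=> hp; elim=> [|m IH].
  by rewrite leqn0 => /eqP <- q hq; apply: (map_f (fun u => _)).
rewrite leq_eqVlt => /orP [/eqP <- q hq|hk q hq].
  by apply: (map_f (fun u => _)).
have hpm : p \in L c n m by exact: L_mono hp.
rewrite /= dig_shift // opprD addrACA subrr add0r (addrAC q p) addrC [X in X \in _]addrC.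
by apply: IH => //; apply: dig_spec.
Qed.

Lemma Scover (Q G : zmodType) (Sg : Q -> G) (Dp : Q -> seq G)
  (h : forall p q, Sg (q + p) - Sg q \in Dp p) (ps : seq Q) :
  exists D : seq G, forall p, p \in ps -> forall q, Sg (q + p) - Sg q \in D.
Proof.
elim: ps => [|p ps [D hD]]; first by exists [::].
exists (Dp p ++ D) => p'; rewrite in_cons => /orP [/eqP -> q|hp q];
  rewrite mem_cat; first by rewrite h.
by rewrite hD ?orbT.
Qed.

Lemma seq_bound (T : eqType) (N : T -> nat) (D : seq T) :
  exists M, forall d, d \in D -> (N d <= M)%N.
Proof.
elim: D => [|x D [M hM]]; first by exists 0%N.
exists (maxn (N x) M) => d; rewrite in_cons => /orP [/eqP ->|hd].
  exact: leq_maxl.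
by apply: leq_trans (hM d hd) _; exact: leq_maxr.
Qed.

Lemma preimage_seq (H G : zmodType) (i : H -> G) : injective i ->
  forall s : seq G, exists t : seq H, forall h, i h \in s -> h \in t.
Proof.
move=> inj; elim=> [|g s [t ht]]; first by exists [::].
case: (classic (exists h, i h = g)) => [[h0 h0e]|hno].
  exists (h0 :: t) => h; rewrite in_cons => /orP [/eqP|hs].
    by rewrite -h0e => /inj ->; exact: mem_head.
  by rewrite in_cons ht ?orbT.
exists t => h; rewrite in_cons => /orP [/eqP e|]; last exact: ht.
by exfalso; apply: hno; exists h.
Qed.

Lemma coarse_nat (X Y : Type) (dX : X -> X -> Rdefinitions.R)
  (dY : Y -> Y -> Rdefinitions.R) (DX : X -> X -> nat) (DY : Y -> Y -> nat)
  (f : X -> Y) :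
  (forall x y, dX x y = (DX x y)%:R) -> (forall u v, dY u v = (DY u v)%:R) ->
  (forall m, exists B, forall x y, (DX x y <= m)%N -> (DY (f x) (f y) <= B)%N) ->
  coarse_map dX dY f.
Proof.
move=> eX eY hB delta hd.
have [B hBB] := hB (Num.Def.archi_bound `|delta|).
exists (B.+1)%:R; first by rewrite ltr0n.
move=> x y hxy; rewrite eY ler_nat; apply: leq_trans (hBB x y _) _ => //.
rewrite -(ler_nat Rdefinitions.R); apply: ltW; rewrite -eX.
apply: (le_lt_trans hxy); apply: (le_lt_trans (ler_norm delta)).
exact: archi_boundP.
Qed.

Lemma bd0 (X Y : Type) (dY : Y -> Y -> Rdefinitions.R) (f g : X -> Y) :
  (forall y, dY y y = 0) -> (forall x, f x = g x) -> bounded_distance dY f g.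
Proof. by move=> h0 hfg; exists 0 => x; rewrite hfg h0. Qed.

Lemma alg1 (G : zmodType) (x y a b : G) : (y - a) - (x - b) = (y - x) - (a - b).
Proof. by rewrite !opprB addrACA [RHS]addrACA; congr (_ + _); rewrite addrC. Qed.
Unset Implicit Arguments.
Import Order.TTheory GRing.Theory Num.Theory.

Theorem mainTheorem4 (G : countZmodType) (H Q : zmodType)
  (i : {additive H -> G}) (pi : {additive G -> Q}) :
  injective i ->
  (forall q : Q, exists g : G, pi g = q) ->
  (forall g : G, pi g = 0 <-> exists h : H, g = i h) ->
  (forall q : Q, has_odd_order q) ->
  coarsely_split i pi.
Proof.
move=> inj surj ker hodd.
pose e j : G := odflt 0 (unpickle j).
pose c j := pi (e j).
have exn : forall j, exists m, (0 < m)%N && (c j *+ m == 0).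
  move=> j; have [m [h1 h2 _ _]] := hodd (c j); exists m; by rewrite h1 h2 eqxx.
pose n j := ex_minn (exn j).
have hnc : forall j, (0 < n j)%N /\ c j *+ n j = 0.
  by move=> j; rewrite /n; case: ex_minnP => m /andP [h1 /eqP h2] _.
have hn : forall j, (0 < n j)%N by move=> j; case: (hnc j).
have hc : forall j, c j *+ n j = 0 by move=> j; case: (hnc j).
have hL : forall q, exists k, q \in L c n k.
  move=> q; have [g <-] := surj q; exists (pickle g).+1.
  have -> : pi g = 0 + c (pickle g) *+ 1 by rewrite add0r /c /e pickleK.
  apply: L_mem => //; apply: (@L_mono _ c n hn hc 0) => //.
  exact: mem_head.
pose lev q := ex_minn (hL q).
have hlev : forall q, q \in L c n (lev q).
  by move=> q; rewrite /lev; case: ex_minnP.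
pose Sg q := S c n e (lev q) q.
have piSg : forall q, pi (Sg q) = q.
  move=> q; apply: piS => //.
have Sg0 : Sg 0 = 0.
  rewrite /Sg (@S_up _ _ c n e hn hc 0) //; exact: mem_head.
have Sgsh : forall p q, Sg (q + p) - Sg q \in
    [seq S c n e (lev p) (u + p) - S c n e (lev p) u | u <- L c n (lev p)].
  move=> p q; pose m := maxn (lev p) (maxn (lev q) (lev (q + p))).
  have h1 : (lev p <= m)%N by rewrite leq_maxl.
  have h2 : (lev q <= m)%N by rewrite /m (leq_trans _ (leq_maxr _ _)) ?leq_maxl.
  have h3 : (lev (q + p)%R <= m)%N
    by rewrite /m (leq_trans _ (leq_maxr _ _)) ?leq_maxr.
  rewrite /Sg -(@S_up _ _ c n e hn hc _ m) // -(@S_up _ _ c n e hn hc _ m (q)) //.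
  apply: S_shift => //; exact: L_mono (hlev q).
have cov := Scover Sgsh.
have hk : forall g, exists h, i h == g - Sg (pi g).
  move=> g; have [h ->] : exists h, g - Sg (pi g) = i h.
    by apply/ker; rewrite raddfB piSg subrr.
  by exists h.
pose k g := xchoose (hk g).
have hk' : forall g, i (k g) = g - Sg (pi g) by move=> g; apply/eqP; exact: (xchooseP (hk g)).
have pii : forall h, pi (i h) = 0 by move=> h; apply/ker; exists h.
have [NG nG] : exists NG : G -> nat, natnorm NG := ex_intro _ _ (wN_natnorm G).
pose NH h := NG (i h).
have nH : natnorm NH.
  case: nG => z0 zN zD zB; split.
  - move=> h; rewrite /NH z0; split; last by move=> ->; rewrite raddf0.
    by move=> h0; apply: inj; rewrite h0 raddf0.
  - by move=> h; rewrite /NH raddfN zN.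
  - by move=> g h; rewrite /NH raddfD zD.
  - move=> r; have [s hs] := zB r; have [t ht] := preimage_seq inj s.
    by exists t => h hh; apply: ht; apply: hs.
have exQ : forall q, exists m, (fun m => if excluded_middle_informative
     (exists g, pi g = q /\ (NG g <= m)%N) then true else false) m.
  move=> q; have [g hg] := surj q; exists (NG g).
  by case: excluded_middle_informative => // hno; exfalso; apply: hno; exists g.
pose NQ q := ex_minn (exQ q).
have NQ_le : forall q m, (NQ q <= m)%N <-> exists g, pi g = q /\ (NG g <= m)%N.
  move=> q m; rewrite /NQ; case: ex_minnP => m0.
  case: excluded_middle_informative => // [[g [hg hm]]] _ hmin; split.
    by move=> hm0; exists g; split => //; apply: leq_trans hm0.
  move=> hex; apply: hmin; case: excluded_middle_informative => // hno; exfalso; exact: (hno hex).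
have NQ_pi : forall g, (NQ (pi g) <= NG g)%N by move=> g; apply/NQ_le; exists g.
have NQ_w : forall q, exists g, pi g = q /\ (NG g <= NQ q)%N.
  by move=> q; apply/NQ_le.
have nQ : natnorm NQ.
  case: nG => z0 zN zD zB; split.
  - move=> q; split; last first.
      move=> ->; apply/eqP; rewrite -leqn0 -{1}(raddf0 pi); apply: leq_trans (NQ_pi 0) _; by rewrite (proj2 (z0 0) erefl).
    move=> h0; have [g [hgq hg]] := NQ_w q.
    by move: hg; rewrite h0 leqn0 => /eqP /z0 hg0; rewrite -hgq hg0 raddf0.
  - have H1 : forall q, (NQ (- q) <= NQ q)%N.
      move=> q; have [g [<- hg]] := NQ_w q.
      by rewrite -raddfN; apply: leq_trans (NQ_pi _) _; rewrite zN.
    move=> q; apply/eqP; rewrite eqn_leq H1 /=.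
    by have := H1 (- q); rewrite opprK.
  - move=> q r; have [g [<- hg]] := NQ_w q; have [h [<- hh]] := NQ_w r.
    rewrite -raddfD; apply: leq_trans (NQ_pi _) _.
    apply: leq_trans (zD _ _) _; exact: leq_add.
  - move=> r; have [s hs] := zB r; exists (map pi s) => q /NQ_le [g [<- hg]].
    by apply: map_f; apply: hs.
have [G0 GN GD GB] := nG.
have [H0 HN HD HB] := nH.
have [Q0 QN QD QB] := nQ.
have NG0 : NG 0 = 0%N by apply/G0.
have NH0 : NH 0 = 0%N by apply/H0.
have NQ0 : NQ 0 = 0%N by apply/Q0.
have NGB : forall a b : G, (NG (a - b)%R <= NG a + NG b)%N.
  by move=> a b; apply: leq_trans (GD _ _) _; rewrite GN.
have hkF : forall u, k (i u.1 + Sg u.2) = u.1.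
  move=> u; apply: inj; rewrite hk' raddfD pii add0r piSg addrK //.
have hki : forall h, k (i h) = h.
  by move=> h; apply: inj; rewrite hk' pii Sg0 subr0.
have Fk : forall g, i (k g) + Sg (pi g) = g by move=> g; rewrite hk' subrK.
exists (fun x => (NH x)%:R : Rdefinitions.R), (fun x => (NG x)%:R : Rdefinitions.R),
  (fun x => (NQ x)%:R : Rdefinitions.R).
split; try exact: natnorm_proper.
exists (fun g => (k g, pi g)) => /=.
have eS : forall u v : H * Q, sum_metric (norm_metric (fun x => (NH x)%:R : Rdefinitions.R))
   (norm_metric (fun x => (NQ x)%:R : Rdefinitions.R)) u v =
   ((NH (v.1 - u.1)%R + NQ (v.2 - u.2)%R)%N)%:R.
  by move=> u v; rewrite /sum_metric /norm_metric natrD.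
have eS0 : forall u : H * Q, sum_metric (norm_metric (fun x => (NH x)%:R : Rdefinitions.R))
   (norm_metric (fun x => (NQ x)%:R : Rdefinitions.R)) u u = 0.
  by move=> u; rewrite eS !subrr NH0 NQ0.
split.
- split.
  + apply: (coarse_nat (DX := fun x y => NG (y - x))
      (DY := fun u v => (NH (v.1 - u.1)%R + NQ (v.2 - u.2)%R)%N)) => //.
    move=> m; have [s hs] := GB m; have [D hD] := cov (map pi s).
    have [M hM] := seq_bound NG D.
    exists (m + M + m)%N => x y hxy /=.
    have hz : y - x \in s := hs _ hxy.
    have hy : y = x + (y - x) by rewrite addrC subrK.
    have hd := hD (pi (y - x)) (map_f pi hz) (pi x).
    apply: leq_add.
      have epy : pi y = pi x + pi (y - x) by rewrite -raddfD -hy.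
      rewrite /NH raddfB !hk' alg1 epy.
      by apply: leq_trans (NGB _ _) _; apply: leq_add => //; apply: hM.
    by rewrite -raddfB; apply: leq_trans (NQ_pi _) _.
  + exists (fun u => i u.1 + Sg u.2); split.
    * apply: (coarse_nat (DY := fun x y => NG (y - x))
        (DX := fun u v => (NH (v.1 - u.1)%R + NQ (v.2 - u.2)%R)%N)) => //.
      move=> m; have [s hs] := QB m; have [D hD] := cov s.
      have [M hM] := seq_bound NG D.
      exists (m + M)%N => u v huv /=.
      rewrite opprD addrACA -raddfB; apply: leq_trans (GD _ _) _.
      apply: leq_add; first by apply: leq_trans huv; exact: leq_addr.
      have hp : v.2 - u.2 \in s by apply: hs; apply: leq_trans huv; exact: leq_addl.
      have := hD _ hp u.2; rewrite [u.2 + _]addrC subrK => hd.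
      exact: hM.
    * by apply: bd0 => [y|x]; rewrite /norm_metric ?subrr ?NG0 // /= Fk.
    * apply: bd0 => [y|x] //; by rewrite /= hkF raddfD pii add0r piSg; case: x.
- by apply: bd0 => // h; rewrite hki pii.
- by apply: bd0 => [y|x]; rewrite /norm_metric ?subrr ?NQ0.
Qed.
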